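(* If $G_{\le t_c}$ is connected, then $$\sum_{t\le t_c}\sum_{i=1}^{m_t}\Delta_{t,i}^2\ge\frac{1}{2dmn}\|x(0)-\hat x\|_q^2,$$ where $q=d\mathbf 1$, $\hat x=\big(\frac1n\sum_ix_i(0)\big)\mathbf 1$, and $\|y\|_q^2=\sum_iq_iy_i^2$.
   Context: Expanding averaging system: - Each $G_t$ is a graph on $[n]$ with self-loops whose $0/1$ adjacency matrix $M_t$ has all row sums $d$. - Every component of $G_t$ has Cheeger constant at least $h$. - $G_t$ has $m_t\le m$ connected components. - The dynamics is $x(t+1)=\frac1dM_tx(t)$. $\Delta_{t,i}$ is the diameter $\max-\min$ of the positions $x_j(t)$ over the vertices $j$ of the $i$-th connected component of $G_t$. $G_{\le t}$ is the union of the edges of $G_0,\dots,G_t$. Let $t_1,\dots,t_c$ be the times $t>0$ at which $G_{\le t}$ has fewer connected components than $G_{\le t-1}$; if there are none, set $c=1$ and $t_c=0$. *)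

(* Defs.v *)
From HB Require Import structures.
From mathcomp Require Import all_boot all_order all_algebra.
Set Implicit Arguments.
Unset Strict Implicit.
Unset Printing Implicit Defensive.
Import Order.TTheory GRing.Theory Num.Theory.
Local Open Scope ring_scope.

Definition adjmx (R : pzRingType) (n : nat) (G : rel 'I_n) : 'M[R]_n :=
  \matrix_(i, j) (G i j)%:R.

Definition comp (n : nat) (G : rel 'I_n) (i : 'I_n) : {set 'I_n} :=
  [set j | connect G i j].
Definition comps (n : nat) (G : rel 'I_n) : {set {set 'I_n}} :=
  [set comp G i | i : 'I_n].
Definition ncomps (n : nat) (G : rel 'I_n) : nat := #|comps G|.

Definition union_upto (n : nat) (G : nat -> rel 'I_n) (t : nat) : rel 'I_n :=
  fun i j => [exists s : 'I_t.+1, G s i j].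

Definition merge_time (n : nat) (G : nat -> rel 'I_n) (t : nat) : bool :=
  (0 < t)%N && (ncomps (union_upto G t) < ncomps (union_upto G t.-1))%N.

Definition is_last_merge (n : nat) (G : nat -> rel 'I_n) (tc : nat) : Prop :=
  (merge_time G tc /\ forall t, merge_time G t -> (t <= tc)%N)
  \/ (tc = 0%N /\ forall t, ~~ merge_time G t).

(* Every component C of G has Cheeger constant (edge expansion)
   min_{S subset C, 0<|S|<=|C|/2} |E(S, C\S)| / |S|  at least h. *)
Definition cheeger_ge (R : realFieldType) (n : nat) (G : rel 'I_n) (h : R) : Prop :=
  forall C, C \in comps G ->
  forall S : {set 'I_n}, S \subset C -> (0 < #|S|)%N -> (2 * #|S| <= #|C|)%N ->
    h * (#|S|%:R) <=
    (#|[set p : 'I_n * 'I_n | [&& p.1 \in S, p.2 \in C :\: S & G p.1 p.2]]|)%:R.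

(* diameter max_{j in C} x_j - min_{j in C} x_j of the positions on C
   (written as the maximum of x_j - x_k over j,k in C; C is nonempty) *)
Definition diam (R : realFieldType) (n : nat) (x : 'I_n -> R) (C : {set 'I_n}) : R :=
  \big[Num.max/0]_(j in C) \big[Num.max/0]_(k in C) (x j - x k).

(* Main.v *)
From Pilot Require Import Defs.
From mathcomp Require Import ring lra zify.
From HB Require Import structures.
From mathcomp Require Import all_boot all_order all_algebra.
Import Order.TTheory GRing.Theory Num.Theory.
Local Open Scope ring_scope.
Set Implicit Arguments.
Unset Strict Implicit.
Unset Printing Implicit Defensive.
Local Notation dcomp := Pilot.Defs.comp.
Lemma seq_argmax (R : realFieldType) (I : eqType) (s : seq I) (r : I -> R) :
  s != [::] -> exists2 k0, k0 \in s & forall k, k \in s -> r k <= r k0.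
Proof.
elim: s => // a s IH _.
case: (eqVneq s [::]) => [->|sn].
  by exists a; rewrite ?mem_head // => k; rewrite inE => /eqP ->.
have [k0 k0s Hk0] := IH sn.
case: (leP (r a) (r k0)) => H.
  exists k0; first by rewrite inE k0s orbT.
  by move=> k; rewrite inE => /orP[/eqP->//|/Hk0].
exists a; first exact: mem_head.
move=> k; rewrite inE => /orP[/eqP->//|/Hk0 Hk]; exact: (le_trans Hk (ltW H)).
Qed.

Lemma cover_len (R : realFieldType) (I : eqType) (s : seq I) (l r : I -> R) (A B : R) :
  (forall k, k \in s -> l k <= r k) ->
  (forall p, A < p -> p <= B -> exists2 k, k \in s & (l k < p) && (p <= r k)) ->
  B - A <= \sum_(k <- s) (r k - l k).
Proof.
elim: {s}(size s) {-2}s (leqnn (size s)) B => [|N IH] s Hs B Hlr Hcov.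
  case: s Hs Hlr Hcov => // _ _ Hcov.
  rewrite big_nil; case: (ltP A B) => AB; last by rewrite subr_le0.
  by have [k] := Hcov B AB (lexx B).
have sum0 : 0 <= \sum_(k <- s) (r k - l k).
  by rewrite big_seq; apply: sumr_ge0 => k ks; rewrite subr_ge0 Hlr.
case: (ltP A B) => AB; last by apply: le_trans sum0; rewrite subr_le0.
case: (eqVneq s [::]) => [sE|sn].
  by have [k] := Hcov B AB (lexx B); rewrite sE.
have [k0 k0s Hk0] := seq_argmax r sn.
rewrite (big_rem _ k0s) /=.
have Bk0 : B <= r k0.
  rewrite leNgt; apply/negP => H.
  have [k ks /andP[_ Bk]] := Hcov B AB (lexx B).
  by have := le_lt_trans (le_trans Bk (Hk0 k ks)) H; rewrite ltxx.
set B' := Num.min B (l k0).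
have IH' : B' - A <= \sum_(k <- rem k0 s) (r k - l k).
  apply: IH.
  - by rewrite size_rem // -ltnS (leq_trans _ Hs) // prednK // lt0n size_eq0.
  - by move=> k /mem_rem; apply: Hlr.
  move=> p Ap; rewrite le_min => /andP[pB plk].
  have [k ks /andP[lk pk]] := Hcov p Ap pB.
  exists k => //; last by rewrite lk pk.
  have kk0 : k != k0.
    apply/eqP => E; subst k.
    by have := lt_le_trans lk plk; rewrite ltxx.
  exact: rem_mem.
have HB : B - B' <= r k0 - l k0.
  rewrite /B'; case: (leP B (l k0)) => H.
    by rewrite subrr subr_ge0 Hlr.
  by rewrite lerD2r.
by apply: le_trans (lerD HB IH'); rewrite addrA subrK.
Qed.
Lemma cauchy_schwarz (R : realFieldType) (I : finType) (P : pred I) (a : I -> R) :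
  (\sum_(i | P i) a i) ^+ 2 <= #|P|%:R * \sum_(i | P i) a i ^+ 2.
Proof.
set S := \sum_(i | P i) a i; set Q := \sum_(i | P i) a i ^+ 2.
have N : #|P|%:R = \sum_(i | P i) (1 : R) by rewrite sumr_const.
have H0 : 0 <= \sum_(i | P i) \sum_(j | P j) (a i - a j) ^+ 2.
  by apply: sumr_ge0 => i _; apply: sumr_ge0 => j _; apply: sqr_ge0.
have E : \sum_(i | P i) \sum_(j | P j) (a i - a j) ^+ 2 =
   2%:R * (#|P|%:R * Q - S ^+ 2).
  transitivity (\sum_(i | P i) (a i ^+ 2 * #|P|%:R + Q - 2%:R * a i * S)).
    apply: eq_bigr => i _.
    rewrite N /Q /S !mulr_sumr -big_split -sumrB /=.
    by apply: eq_bigr => j _; rewrite mulr1; ring.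
  rewrite sumrB big_split /= -mulr_suml -/Q sumr_const -mulr_suml -mulr_sumr -/S.
  rewrite -[_ *+ #|_|]mulr_natr; ring.
have : 0 <= 2%:R * (#|P|%:R * Q - S ^+ 2) by rewrite -E.
by rewrite pmulr_rge0 // subr_ge0.
Qed.
Lemma connect_pres (T : finType) (e : rel T) (f : T -> bool) :
  (forall x y, e x y -> f x = f y) -> forall x y, connect e x y -> f x = f y.
Proof.
move=> He x y /connectP[p pp ->]; elim: p x pp => //= z p IHp x /andP[exz pz].
by rewrite (He _ _ exz) IHp.
Qed.

Lemma comp_connect (n : nat) (e : rel 'I_n) i j :
  symmetric e -> connect e i j -> dcomp e i = dcomp e j.
Proof.
move=> se cij; apply/setP => k; rewrite !inE; apply/idP/idP => H.
  by apply: connect_trans H; rewrite sym_connect_sym.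
exact: connect_trans cij H.
Qed.

Lemma mem_comp (n : nat) (e : rel 'I_n) i j : (j \in dcomp e i) = connect e i j.
Proof. by rewrite inE. Qed.

Lemma comps_imset (n : nat) (e e' : rel 'I_n) :
  symmetric e -> symmetric e' -> subrel e e' ->
  comps e' = (fun S : {set 'I_n} => [set j | [exists i in S, connect e' i j]]) @: comps e.
Proof.
move=> se se' sub; rewrite /comps -imset_comp; apply: eq_imset => i /=.
apply/setP => j; rewrite !inE; apply/idP/existsP => [H|[k /andP[]]].
  by exists i; rewrite inE connect0 H.
rewrite inE => cik ckj; apply: connect_trans ckj.
by apply: connect_sub cik => x y /sub /connect1.
Qed.

Lemma ncomps_mono (n : nat) (e e' : rel 'I_n) :
  symmetric e -> symmetric e' -> subrel e e' -> (ncomps e' <= ncomps e)%N.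
Proof.
move=> se se' sub; rewrite /ncomps (comps_imset se se' sub); exact: leq_imset_card.
Qed.

Lemma ncomps_strict (n : nat) (e e' : rel 'I_n) i j :
  symmetric e -> symmetric e' -> subrel e e' ->
  connect e' i j -> ~~ connect e i j -> (ncomps e' < ncomps e)%N.
Proof.
move=> se se' sub c' nc; rewrite /ncomps (comps_imset se se' sub).
rewrite ltn_neqAle leq_imset_card andbT; apply/negP => /imset_injP inj.
have Hi : dcomp e i \in comps e by apply: imset_f.
have Hj : dcomp e j \in comps e by apply: imset_f.
have : dcomp e i = dcomp e j.
  apply: inj => //; apply/setP => k; rewrite !inE.
  apply/existsP/existsP => -[l /andP[]]; rewrite inE => cl clk.
    exists j; rewrite inE connect0 /=; apply: connect_trans clk.
    have cil : connect e' i l by apply: connect_sub cl => x y /sub /connect1.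
    by apply: connect_trans cil; rewrite sym_connect_sym.
  exists i; rewrite inE connect0 /=; apply: connect_trans clk.
  have cjl : connect e' j l by apply: connect_sub cl => x y /sub /connect1.
  exact: connect_trans c' cjl.
move/setP/(_ j); rewrite !inE connect0 => H; by rewrite H in nc.
Qed.
Lemma dyn_side (R : realFieldType) (n d : nat) (A : rel 'I_n) (x y : 'cV[R]_n) (p : R) :
  reflexive A ->
  (forall i : 'I_n, \sum_(j < n) adjmx R A i j = d%:R) ->
  y = d%:R^-1 *: (adjmx R A *m x) ->
  (forall u v, A u v -> (x u 0 < p) = (x v 0 < p)) ->
  forall j, (y j 0 < p) = (x j 0 < p).
Proof.
move=> rA rs -> Hs j.
have dE : d%:R = \sum_(k < n) (A j k)%:R :> R.
  by rewrite -(rs j); apply: eq_bigr => k _; rewrite mxE.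
have dpos : (0 : R) < d%:R.
  rewrite dE (bigD1 j) //= rA ltr_pwDl //; apply: sumr_ge0 => k _; exact: ler0n.
have yE : (d%:R^-1 *: (adjmx R A *m x)) j 0 - p =
    d%:R^-1 * \sum_(k < n) (A j k)%:R * (x k 0 - p).
  rewrite !mxE; apply: (@mulfI _ d%:R); first by rewrite gt_eqF.
  rewrite mulrBr mulrA divff ?gt_eqF // mul1r mulrA divff ?gt_eqF // mul1r.
  rewrite dE mulr_suml -sumrB; apply: eq_bigr => k _; rewrite mxE; ring.
rewrite -subr_lt0 yE pmulr_rlt0 ?invr_gt0 //.
case: (ltP (x j 0) p) => Hj.
  rewrite (bigD1 j) //= rA mul1r.
  have Hs0 : \sum_(k < n | k != j) (A j k)%:R * (x k 0 - p) <= 0.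
    apply: sumr_le0 => k _; case Ajk: (A j k); last by rewrite mul0r.
    by rewrite mul1r subr_le0 ltW // -(Hs _ _ Ajk).
  by apply: (le_lt_trans (lerD (lexx _) Hs0)); rewrite addr0 subr_lt0.
apply/negbTE; rewrite -leNgt; apply: sumr_ge0 => k _.
case Ajk: (A j k); last by rewrite mul0r.
by rewrite mul1r subr_ge0 leNgt -(Hs _ _ Ajk) -leNgt.
Qed.
Definition bl (n : nat) (G : nat -> rel 'I_n) (s : nat) (C : {set 'I_n}) : rel 'I_n :=
  fun i j => [&& G s i j, i \in C & j \in C].
Definition Fk (n : nat) (G : nat -> rel 'I_n) (s k : nat) : rel 'I_n :=
  fun i j => union_upto G s.-1 i j ||
             has (fun C => bl G s C i j) (take k (enum (comps (G s)))).
Definition usefulk (n : nat) (G : nat -> rel 'I_n) (s k : nat) : bool :=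
  let C := nth set0 (enum (comps (G s))) k in
  [exists i in C, exists j in C, ~~ connect (Fk G s k) i j].
Definition chosen (n : nat) (G : nat -> rel 'I_n) (t : nat) (C : {set 'I_n}) : bool :=
  (t == 0%N) || usefulk G t (index C (enum (comps (G t)))).

Lemma union_sym (n : nat) (G : nat -> rel 'I_n) s :
  (forall t, symmetric (G t)) -> symmetric (union_upto G s).
Proof.
by move=> sG i j; apply/existsP/existsP => -[t H]; exists t; rewrite sG.
Qed.

Lemma Fk_sym (n : nat) (G : nat -> rel 'I_n) s k :
  (forall t, symmetric (G t)) -> symmetric (Fk G s k).
Proof.
move=> sG i j; rewrite /Fk union_sym //; congr (_ || _).
by apply: eq_has => C; rewrite /bl sG; case: (i \in C); case: (j \in C).
Qed.

Lemma path_lift (n : nat) (e : rel 'I_n) (C : {set 'I_n}) i j :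
  (forall u v, e u v -> u \in C -> v \in C) -> i \in C -> connect e i j ->
  connect (fun u v => [&& e u v, u \in C & v \in C]) i j.
Proof.
move=> cl iC /connectP[p pp ->]; elim: p i iC pp => //= y p IHp i iC /andP[eiy py].
have yC := cl _ _ eiy iC.
apply: connect_trans (IHp _ yC py); apply: connect1; by rewrite eiy iC yC.
Qed.

Lemma count_step (n : nat) (G : nat -> rel 'I_n) s k :
  (forall t, symmetric (G t)) -> (k < size (enum (comps (G s))))%N ->
  (usefulk G s k + ncomps (Fk G s k.+1) <= ncomps (Fk G s k))%N.
Proof.
move=> sG ks; set e := enum (comps (G s)).
have sub : subrel (Fk G s k) (Fk G s k.+1).
  move=> i j; rewrite /Fk => /orP[->//|H]; apply/orP; right.
  by rewrite -addn1 takeD has_cat H.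
case U : (usefulk G s k); last by rewrite add0n; apply: ncomps_mono => //; apply: Fk_sym.
rewrite add1n; move: U; rewrite /usefulk -/e.
set C := nth set0 e k => /existsP[i /andP[iC /existsP[j /andP[jC nc]]]].
apply: (ncomps_strict (i := i) (j := j)) => //; try apply: Fk_sym => //.
have Ce : C \in comps (G s) by rewrite -mem_enum; apply: mem_nth.
case/imsetP: Ce => c _ Cc.
have cl : forall u v, G s u v -> u \in C -> v \in C.
  move=> u v guv; rewrite Cc !inE => cu; apply: connect_trans cu _; exact: connect1.
have cij : connect (G s) i j.
  move: iC jC; rewrite Cc !inE => ci cj; apply: connect_trans cj.
  by rewrite sym_connect_sym.
apply: connect_sub (path_lift cl iC cij) => u v /and3P[guv uC vC]; apply: connect1.
apply/orP; right; rewrite -addn1 takeD has_cat; apply/orP; right.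
rewrite (drop_nth set0 ks) /= -/C /bl guv uC vC.
by [].
Qed.
Lemma count_time (n : nat) (G : nat -> rel 'I_n) s :
  (forall t, symmetric (G t)) -> (0 < s)%N ->
  (\sum_(C in comps (G s)) (chosen G s C : nat) + ncomps (union_upto G s)
     <= ncomps (union_upto G s.-1))%N.
Proof.
move=> sG s0; set e := enum (comps (G s)).
have -> : (\sum_(C in comps (G s)) (chosen G s C : nat) =
          \sum_(0 <= k < size e) (usefulk G s k : nat))%N.
  rewrite -big_enum -/e (big_nth set0) /= big_mkcond /=; apply: eq_big_nat => k /andP[_ ks].
  by rewrite /chosen eqn0Ngt s0 /= -/e index_uniq // enum_uniq.
have ind : forall k, (k <= size e)%N ->
    (\sum_(0 <= k' < k) (usefulk G s k' : nat) + ncomps (Fk G s k) <= ncomps (Fk G s 0))%N.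
  elim => [|k IH] ks; first by rewrite big_nil.
  rewrite big_nat_recr //= -addnA; apply: leq_trans (IH (ltnW ks)).
  by rewrite leq_add2l; apply: count_step.
apply: leq_trans (leq_trans (ind _ (leqnn _)) _).
  rewrite leq_add2l; apply: ncomps_mono => //; [exact: Fk_sym | exact: union_sym |].
  move=> i j; rewrite /Fk => /orP[|].
    case: s s0 {e ind} => // s _ /= /existsP[t H].
    by apply/existsP; exists (widen_ord (leqnSn _) t).
  move/hasP => [C _ /and3P[H _ _]]; apply/existsP; exists ord_max; exact: H.
apply: ncomps_mono => //; [exact: union_sym | exact: Fk_sym |].
by move=> i j H; rewrite /Fk H.
Qed.

Lemma count_all (n : nat) (G : nat -> rel 'I_n) tc :
  (forall t, symmetric (G t)) ->
  (\sum_(1 <= s < tc.+1) \sum_(C in comps (G s)) (chosen G s C : nat)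
     + ncomps (union_upto G tc) <= ncomps (union_upto G 0))%N.
Proof.
move=> sG; elim: tc => [|tc IH]; first by rewrite big_geq.
rewrite big_nat_recr //= -addnA; apply: leq_trans IH; rewrite leq_add2l.
exact: (count_time sG (ltn0Sn tc)).
Qed.
Definition cross (R : realFieldType) (n : nat) (y : 'cV[R]_n) (p : R) (C : {set 'I_n}) : bool :=
  [exists i in C, exists j in C, (y i 0 < p) && ~~ (y j 0 < p)].

Lemma nocross_edge (R : realFieldType) (n : nat) (A : rel 'I_n) (y : 'cV[R]_n) p u v :
  ~~ [exists C in comps A, cross y p C] -> A u v -> (y u 0 < p) = (y v 0 < p).
Proof.
move=> nQ Auv; have Ce : dcomp A u \in comps A by apply: imset_f.
have uC : u \in dcomp A u by rewrite inE connect0.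
have vC : v \in dcomp A u by rewrite inE connect1.
apply/eqP; apply/negP => neq; move/negP: nQ; apply; apply/existsP; exists (dcomp A u).
rewrite Ce /=; case: (ltP (y u 0) p) neq => Hu; case: (ltP (y v 0) p) => Hv //= _.
  by apply/existsP; exists u; rewrite uC; apply/existsP; exists v; rewrite vC Hu -leNgt Hv.
by apply/existsP; exists v; rewrite vC; apply/existsP; exists u; rewrite uC Hv -leNgt Hu.
Qed.

Lemma stable_side (R : realFieldType) (n d : nat) (G : nat -> rel 'I_n) (x : nat -> 'cV[R]_n) p t :
  (forall t, reflexive (G t)) ->
  (forall t (i : 'I_n), \sum_(j < n) adjmx R (G t) i j = d%:R) ->
  (forall t, x t.+1 = d%:R^-1 *: (adjmx R (G t) *m x t)) ->
  (forall s, (s < t)%N -> ~~ [exists C in comps (G s), cross (x s) p C]) ->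
  forall s, (s <= t)%N -> forall j, (x s j 0 < p) = (x 0%N j 0 < p).
Proof.
move=> rG rs step nQ; elim => [|s IH] st j //.
rewrite (dyn_side (rG s) (rs s) (step s)) ?IH ?(ltnW st) //.
by move=> u v; apply: nocross_edge; apply: nQ.
Qed.
Lemma cross_core (R : realFieldType) (n d : nat) (G : nat -> rel 'I_n) (x : nat -> 'cV[R]_n)
    tc p (a b : 'I_n) :
  (forall t, symmetric (G t)) ->
  (forall t, reflexive (G t)) ->
  (forall t (i : 'I_n), \sum_(j < n) adjmx R (G t) i j = d%:R) ->
  (forall t, x t.+1 = d%:R^-1 *: (adjmx R (G t) *m x t)) ->
  (forall i j, connect (union_upto G tc) i j) ->
  x 0%N a 0 < p -> ~~ (x 0%N b 0 < p) ->
  exists t : 'I_tc.+1, exists2 C, C \in comps (G t) & chosen G t C && cross (x t) p C.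
Proof.
move=> sG rG rs step conn Ha Hb.
pose Q t := [exists C in comps (G t), cross (x t) p C].
have [Hex|Hnone] := boolP [exists t : 'I_tc.+1, Q t]; last first.
  have nQ : forall s, (s < tc.+1)%N -> ~~ Q s.
    by move=> s st; apply/negP => Qs; move/negP: Hnone; apply; apply/existsP; exists (Ordinal st).
  have st := stable_side rG rs step nQ.
  have H : (x 0%N a 0 < p) = (x 0%N b 0 < p).
    apply: (connect_pres (f := fun j => x 0%N j 0 < p) _ (conn a b)) => u v /existsP[s Hs].
    have sl : (s <= tc.+1)%N by rewrite ltnW.
    rewrite -(st s sl u) -(st s sl v); exact: (nocross_edge (nQ s (ltn_ord s)) Hs).
  by rewrite Ha (negbTE Hb) in H.
have exP : exists t, (t <= tc)%N && Q t.
  by case/existsP: Hex => t Qt; exists t; rewrite -ltnS ltn_ord Qt.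
have [ts /andP[tsc Qts] tsmin] := ex_minnP exP.
have nQ : forall s, (s < ts)%N -> ~~ Q s.
  move=> s sts; apply/negP => Qs; have := tsmin s; rewrite Qs (leq_trans (ltnW sts) tsc).
  by move/(_ isT); rewrite leqNgt sts.
have st := stable_side rG rs step nQ.
have tsI : (ts < tc.+1)%N by [].
exists (Ordinal tsI) => /=.
case: (posnP ts) => [ts0|tsp].
  case/existsP: Qts => C /andP[Ce Cc]; exists C => //; by rewrite Cc andbT /chosen ts0 eqxx.
set e := enum (comps (G ts)).
have exK : exists k, (k < size e)%N && cross (x ts) p (nth set0 e k).
  case/existsP: Qts => C /andP[Ce Cc]; exists (index C e).
  have Cin : C \in e by rewrite mem_enum.
  by rewrite index_mem Cin nth_index.
have [k /andP[ke Ck] kmin] := ex_minnP exK.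
set C := nth set0 e k in Ck.
have Ce : C \in comps (G ts) by rewrite -mem_enum mem_nth.
exists C => //; rewrite Ck andbT /chosen /usefulk /= index_uniq ?enum_uniq // -/e -/C.
case/existsP: Ck => i /andP[iC /existsP[j /andP[jC /andP[Hi Hj]]]].
apply/orP; right; apply/existsP; exists i; rewrite iC; apply/existsP; exists j; rewrite jC /=.
apply/negP => cij.
suff H : (x ts i 0 < p) = (x ts j 0 < p) by rewrite Hi (negbTE Hj) in H.
apply: (connect_pres (f := fun j => x ts j 0 < p) _ cij) => u v.
rewrite /Fk => /orP[/existsP[s Hs]|/hasP[C' C'in /and3P[Huv uC' vC']]].
  have sts : (s < ts)%N by rewrite -[X in (_ < X)%N](prednK tsp); exact: ltn_ord s.
  rewrite !st ?(ltnW sts) // -!(st s) ?(ltnW sts) //.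
  exact: (nocross_edge (nQ s sts) Hs).
have k'def := nth_index set0 C'in.
set k' := index C' (take k e) in k'def.
have k'k : (k' < k)%N.
  have := index_mem C' (take k e); rewrite C'in size_take => H.
  by rewrite ke in H.
have k'e : (k' < size e)%N by apply: ltn_trans ke.
rewrite nth_take // in k'def.
have nc : ~~ cross (x ts) p C'.
  apply/negP => cc; have := kmin k'; rewrite k'e k'def cc => /(_ isT).
  by rewrite leqNgt k'k.
case: (ltP (x ts u 0) p) => Hu; case: (ltP (x ts v 0) p) => Hv //; move/negP: nc; case; apply/existsP.
  by exists u; rewrite uC'; apply/existsP; exists v; rewrite vC' Hu -leNgt Hv.
by exists v; rewrite vC'; apply/existsP; exists u; rewrite uC' Hv -leNgt Hu.
Qed.
Lemma bigmax_attain (R : realFieldType) (n : nat) (C : {set 'I_n}) (f : 'I_n -> R) c :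
  c \in C -> exists2 j, j \in C & \big[Num.max/f c]_(i in C) f i = f j.
Proof.
move=> cC; apply: (big_ind (fun v => exists2 j, j \in C & v = f j)).
- by exists c.
- move=> u v [j jC ->] [k kC ->]; case: (leP (f j) (f k)) => _; [by exists k | by exists j].
- by move=> i iC; exists i.
Qed.

Lemma diam_ge (R : realFieldType) (n : nat) (C : {set 'I_n}) (f : 'I_n -> R) i j :
  i \in C -> j \in C -> f i - f j <= diam f C.
Proof.
move=> iC jC; rewrite /diam.
apply: le_trans (le_bigmax_cond _ _ iC); exact: (le_bigmax_cond _ _ jC).
Qed.

Lemma diam_ge0 (R : realFieldType) (n : nat) (C : {set 'I_n}) (f : 'I_n -> R) :
  0 <= diam f C.
Proof.
rewrite /diam; exact: bigmax_ge_id.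
Qed.
Unset Implicit Arguments.
Set Strict Implicit.
Theorem lemma8 (R : realFieldType) (n d m : nat) (h : R)
  (G : nat -> rel 'I_n) (x : nat -> 'cV[R]_n) (tc : nat) :
  0 < h ->
  (forall t, symmetric (G t)) ->
  (forall t, reflexive (G t)) ->
  (forall t (i : 'I_n), \sum_(j < n) adjmx R (G t) i j = d%:R) ->
  (forall t, cheeger_ge (G t) h) ->
  (forall t, (ncomps (G t) <= m)%N) ->
  (forall t, x t.+1 = d%:R^-1 *: (adjmx R (G t) *m x t)) ->
  is_last_merge G tc ->
  (forall i j, connect (union_upto G tc) i j) ->
  (2 * d * m * n)%:R^-1 *
    (\sum_(i < n) d%:R * (x 0%N i 0 - n%:R^-1 * \sum_(j < n) x 0%N j 0) ^+ 2)
  <= \sum_(t < tc.+1) \sum_(C in comps (G t)) diam (fun i => x t i 0) C ^+ 2.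
Proof.
move=> _ sG rG rs _ ncm step _ conn.
set RHS := \sum_(t < tc.+1) _.
have RHS0 : 0 <= RHS by apply: sumr_ge0 => t _; apply: sumr_ge0 => C _; apply: sqr_ge0.
case: (posnP n) => [n0|npos].
  rewrite big1 ?mulr0 // => i; have := ltn_ord i; by rewrite {2}n0.
pose i0 := Ordinal npos.
have dposR : (0 : R) < d%:R.
  rewrite -(rs 0%N i0) (bigD1 i0) //= mxE rG ltr_pwDl //.
  by apply: sumr_ge0 => k _; rewrite mxE ler0n.
have mpos : (0 < m)%N.
  apply: leq_trans (ncm 0%N); rewrite /ncomps card_gt0; apply/set0Pn.
  by exists (dcomp (G 0%N) i0); apply: imset_f.
pose xv i := x 0%N i 0.
have ne : enum 'I_n != [::] by rewrite -size_eq0 size_enum_ord -lt0n.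
have [b _ Hb] := seq_argmax xv ne.
have [a _ Ha] := seq_argmax (fun i => - xv i) ne.
have Hb' : forall i, xv i <= xv b by move=> i; apply: Hb; rewrite mem_enum.
have Ha' : forall i, xv a <= xv i by move=> i; rewrite -lerN2; apply: Ha; rewrite mem_enum.
pose I := ('I_tc.+1 * {set 'I_n})%type.
pose P := fun k : I => (k.2 \in comps (G k.1)) && chosen G k.1 k.2.
pose Dg := fun k : I => diam (fun i => x k.1 i 0) k.2.
pose cc := fun k : I => odflt i0 [pick j in k.2].
pose rr := fun k : I => \big[Num.max/x k.1 (cc k) 0]_(j in k.2) x k.1 j 0.
pose ll := fun k : I => rr k - Dg k.
have cover : xv b - xv a <= \sum_(k | P k) Dg k.
  have -> : \sum_(k | P k) Dg k = \sum_(k <- enum P) (rr k - ll k).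
    rewrite big_enum /=; apply: eq_big => [k//|k _].
    by rewrite /ll opprB addrC subrK.
  apply: cover_len => [k _|p Ap pB].
    by rewrite /ll lerBlDr lerDl diam_ge0.
  have pBn : ~~ (x 0%N b 0 < p) by rewrite -leNgt.
  have [t [C Ce /andP[ch cr]]] := cross_core sG rG rs step conn Ap pBn.
  exists (t, C); first by rewrite mem_enum; apply/andP.
  case/existsP: cr => i /andP[iC /existsP[j /andP[jC /andP[Hi Hj]]]].
  have ccC : cc (t, C) \in C by rewrite /cc; case: pickP => [y //|/(_ i)]; rewrite iC.
  have [js jsC jsE] := bigmax_attain (fun j => x t j 0) ccC.
  rewrite /ll /rr /= jsE; apply/andP; split.
    have := diam_ge (fun j => x t j 0) jsC iC; rewrite /Dg /=; lra.
  rewrite -leNgt in Hj; apply: le_trans Hj _; rewrite -jsE.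
  exact: (le_bigmax_cond _ _ jC).
have cs := cauchy_schwarz P Dg.
have cardP : (#|P| <= 2 * m)%N.
  rewrite -sum1_card.
  have -> : (\sum_(k in P) 1 = \sum_(t < tc.+1) \sum_(C in comps (G t)) (chosen G t C : nat))%N.
    rewrite (eq_bigl (fun k : I => true && ((k.2 \in comps (G k.1)) && chosen G k.1 k.2))) //.
    rewrite -(pair_big_dep xpredT (fun (t : 'I_tc.+1) (C : {set 'I_n}) => (C \in comps (G t)) && chosen G t C) (fun _ _ => 1%N)).
    apply: eq_bigr => t _; rewrite big_mkcondr /=; apply: eq_bigr => C _; by case: chosen.
  rewrite big_ord_recl /=.
  rewrite [X in (X + _ <= _)%N](_ : _ = ncomps (G 0%N)); last by rewrite sum1_card.
  have h0 := ncm 0%N.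
  have h1 := count_all tc sG.
  have -> : (\sum_(i < tc) \sum_(C in comps (G (lift ord0 i))) (chosen G (lift ord0 i) C : nat) =
           \sum_(1 <= s < tc.+1) \sum_(C in comps (G s)) (chosen G s C : nat))%N.
    by rewrite big_add1 /= big_mkord.
  have h2 : (ncomps (union_upto G 0) <= m)%N.
    apply: leq_trans (ncm 0%N); apply: ncomps_mono => //; first exact: union_sym.
    by move=> i j H; apply/existsP; exists ord0.
  have h3 : (0 < ncomps (union_upto G tc))%N.
    rewrite /ncomps card_gt0; apply/set0Pn.
    by exists (dcomp (union_upto G tc) i0); apply: imset_f.
  lia.
have sub : \sum_(k | P k) Dg k ^+ 2 <= RHS.
  rewrite /RHS (eq_bigr (fun t : 'I_tc.+1 => \sum_(C | C \in comps (G t)) Dg (t, C) ^+ 2)) //.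
  rewrite (pair_big_dep xpredT (fun (t : 'I_tc.+1) (C : {set 'I_n}) => C \in comps (G t)) (fun t C => Dg (t, C) ^+ 2)) /=.
  rewrite [X in _ <= X](bigID P) /= -[X in X <= _]addr0; apply: lerD.
    by rewrite le_eqVlt; apply/orP; left; apply/eqP; apply: eq_bigl => k; rewrite /P; case: (_ \in _).
  by apply: sumr_ge0 => k _; apply: sqr_ge0.
set D := xv b - xv a.
have D0 : 0 <= D by rewrite subr_ge0.
have key : D ^+ 2 <= (2 * m)%:R * RHS.
  have S0 : 0 <= \sum_(k | P k) Dg k ^+ 2 by apply: sumr_ge0 => k _; apply: sqr_ge0.
  apply: le_trans (_ : #|P|%:R * \sum_(k | P k) Dg k ^+ 2 <= _).
    apply: le_trans cs; rewrite ler_sqr //; exact: le_trans cover.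
  apply: le_trans (ler_wpM2l (ler0n _ _) sub).
  by apply: ler_wpM2r => //; rewrite ler_nat.
set xh := n%:R^-1 * \sum_(j < n) x 0%N j 0.
have nR : (0 : R) < n%:R by rewrite ltr0n.
have xhA : xv a <= xh.
  rewrite /xh ler_pdivlMl // -[X in _ <= X]/(\sum_(j < n) xv j).
  apply: le_trans (_ : \sum_(j < n) xv a <= _); last by apply: ler_sum => j _.
  by rewrite sumr_const card_ord mulr_natl.
have xhB : xh <= xv b.
  rewrite /xh ler_pdivrMl // -[X in X <= _]/(\sum_(j < n) xv j).
  apply: (@le_trans _ _ (\sum_(j < n) xv b)); first by apply: ler_sum => j _.
  by rewrite sumr_const card_ord mulr_natl.
have each : forall i, (x 0%N i 0 - xh) ^+ 2 <= D ^+ 2.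
  move=> i; have := Ha' i; have := Hb' i; move: xhA xhB; rewrite /D /xv => h1 h2 h3 h4.
  nra.
have dpos : (0 < d)%N by rewrite -(ltr0n R).
have pos : (0 < 2 * d * m * n)%N by rewrite !muln_gt0 dpos mpos npos.
rewrite ler_pdivrMl ?ltr0n //.
apply: (@le_trans _ _ (\sum_(i < n) d%:R * D ^+ 2)).
  by apply: ler_sum => i _; apply: ler_wpM2l; [exact: ler0n | exact: each].
rewrite sumr_const card_ord.
have -> : (2 * d * m * n)%:R * RHS = (d%:R * n%:R) * ((2 * m)%:R * RHS) by rewrite !natrM; ring.
have -> : (d%:R * D ^+ 2) *+ n = (d%:R * n%:R) * D ^+ 2 by rewrite -mulr_natr; ring.
by apply: ler_wpM2l => //; rewrite mulr_ge0 ?ler0n.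
Qed.
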